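(* Let $q$ be a power of an odd prime, $n>3$ an odd integer with $\gcd(n,q-1)=1$, $\delta\in\mathbb{F}_{q^n}^*$ with $\delta\neq1$ and multiplicative order of $\delta$ dividing $q-1$, and $0<r<n$ an integer with $\gcd(r,n)=1$. Then $S(x)=x^q+\delta x^{q^{2r+1}}$ is a scattered polynomial of index $r+1$ over $\mathbb{F}_{q^n}$. Moreover, $S(x)$ is a scattered polynomial of index $t$ over $\mathbb{F}_{q^n}$ for each $t\in\{1,r+1,2r+1\}$.
   Context: For a polynomial $S\in\mathbb{F}_{q^n}[x]$ and a nonnegative integer $t$, $S$ is a scattered polynomial of index $t$ over $\mathbb{F}_{q^n}$ if for all $y,z\in\mathbb{F}_{q^n}^*$, $\frac{S(y)}{y^{q^t}}=\frac{S(z)}{z^{q^t}}$ implies $y/z\in\mathbb{F}_q$ (exponents $q^{e}$ are evaluated as maps on $\mathbb{F}_{q^n}$, so only $e \bmod n$ matters). *)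

(* Defs.v *)
From HB Require Import structures.
From mathcomp Require Import all_boot all_order all_algebra all_field.
Set Implicit Arguments. Unset Strict Implicit. Unset Printing Implicit Defensive.
Import GRing.Theory.
Local Open Scope ring_scope.

(* L is meant to be F_{q^n} (a finite field with #|L| = q^n).
   The subfield F_q is {x | x^q = x}. q^e-th powers are the maps x |-> x^(q^e). *)

Definition scattered (L : finFieldType) (q t : nat) (S : {poly L}) : Prop :=
  forall y z : L, y != 0 -> z != 0 ->
    S.[y] / y ^+ (q ^ t) = S.[z] / z ^+ (q ^ t) ->
    (y / z) ^+ q = y / z.

(* Main.v *)
Require Import Defs.
From HB Require Import structures.
From mathcomp Require Import all_boot all_order all_algebra all_field.
From mathcomp Require Import ring zify.
Local Open Scope ring_scope.
Import GRing.Theory.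
Set Implicit Arguments. Unset Strict Implicit.

Section Core.
Variables (L : finFieldType) (q n : nat) (d : L).
Hypothesis hq : forall x : L, x ^+ (q ^ n) = x.
Hypothesis hfr : forall e (x y : L), (x - y) ^+ (q ^ e) = x ^+ (q ^ e) - y ^+ (q ^ e).
Hypothesis n0 : (0 < n)%N.
Hypothesis q0 : (0 < q)%N.
Hypothesis nodd : odd n.
Hypothesis hd0 : d != 0.
Hypothesis hd1 : d != 1.
Hypothesis hdq : d ^+ q.-1 = 1.
Hypothesis hcop : coprime n q.-1.

Lemma fixmul (x : L) e j : x ^+ (q ^ e) = x -> x ^+ (q ^ (j * e)) = x.
Proof.
move=> h; elim: j => [|j IH]; first by rewrite mul0n expn0 expr1.
by rewrite mulSn expnD exprM h IH.
Qed.

Lemma fixgcd (x : L) m e : (0 < m)%N -> x ^+ (q ^ m) = x -> x ^+ (q ^ e) = x ->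
  x ^+ (q ^ (gcdn m e)) = x.
Proof.
move=> m0 hm he; case: (egcdnP e m0) => km kn def _.
have := fixmul km hm; by rewrite def expnD exprM (fixmul kn he).
Qed.

Lemma final (v : L) e : (0 < e)%N -> coprime e n -> (v ^+ q) ^+ (q ^ e) = v ^+ q ->
  v ^+ q = v.
Proof.
move=> e0 cen h.
have h1 := fixgcd e0 h (hq _); rewrite (eqP cen) expn1 in h1.
have hj : forall j, v ^+ (q ^ j.+1) = v ^+ q.
  elim=> [|j IH]; first by rewrite expn1.
  by rewrite expnSr exprM IH h1.
by rewrite -{2}(hq v) -(prednK n0) hj.
Qed.

Lemma dfix e : d ^+ (q ^ e) = d.
Proof.
have := @fixmul d 1%N e; rewrite muln1; apply; rewrite expn1.
by rewrite -(prednK q0) exprS hdq mulr1.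
Qed.

Lemma dn : d ^+ n = 1 -> False.
Proof.
move=> h; case: (egcdnP q.-1 n0) => km kn def _.
rewrite (eqP hcop) in def.
have : d ^+ (km * n) = 1 by rewrite mulnC exprM h expr1n.
rewrite def exprD mulnC exprM hdq expr1n mul1r expr1 => /eqP.
by rewrite (negPf hd1).
Qed.

Let S r : {poly L} := 'X^q + d *: 'X^(q ^ (2 * r + 1)).

Lemma Sval r (y : L) : (S r).[y] = y ^+ q + d * ((y ^+ q) ^+ (q ^ r)) ^+ (q ^ r).
Proof.
have e : (2 * r + 1 = (r + r).+1)%N by lia.
by rewrite /S hornerD hornerZ !hornerXn -!exprM e expnS expnD.
Qed.

Lemma fin2 r (y z : L) : (0 < r)%N -> coprime r n -> y != 0 -> z != 0 ->
  let a := y ^+ q in let b := z ^+ q in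
  ((a ^+ (q ^ r)) ^+ (q ^ r)) * b = ((b ^+ (q ^ r)) ^+ (q ^ r)) * a ->
  (y / z) ^+ q = y / z.
Proof.
move=> r0 crn y0 z0 a b h.
have a0 : a != 0 by rewrite expf_neq0.
have b0 : b != 0 by rewrite expf_neq0.
apply: (@final _ (r + r)); first by lia.
  by rewrite addnn -mul2n coprimeMl coprime2n nodd.
rewrite exprMn exprVn -/a -/b expnD exprM !exprMn !exprVn.
apply/eqP; rewrite eqr_div ?expf_neq0 //; apply/eqP.
by rewrite h mulrC.
Qed.

Lemma scat1 r : (0 < r)%N -> coprime r n -> scattered q 1 (S r).
Proof.
move=> r0 crn y z y0 z0; rewrite !Sval expn1.
set a := y ^+ q; set b := z ^+ q.
set a2 := (a ^+ _) ^+ _; set b2 := (b ^+ _) ^+ _.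
have a0 : a != 0 by rewrite expf_neq0.
have b0 : b != 0 by rewrite expf_neq0.
move/eqP; rewrite eqr_div // => /eqP H.
apply: (fin2 r0 crn y0 z0) => /=; rewrite -/a -/b -/a2 -/b2.
have : d * (a2 * b - b2 * a) = 0.
  rewrite -[RHS](subrr ((b + d * b2) * a)) -{1}H; ring.
move/eqP; rewrite mulf_eq0 (negPf hd0) /= subr_eq0 => /eqP //.
Qed.

Lemma scat3 r : (0 < r)%N -> coprime r n -> scattered q (2 * r + 1) (S r).
Proof.
move=> r0 crn y z y0 z0.
have E : forall x : L, x ^+ (q ^ (2 * r + 1)) = ((x ^+ q) ^+ (q ^ r)) ^+ (q ^ r).
  have e : (2 * r + 1 = (r + r).+1)%N by lia.
  by move=> x; rewrite -!exprM e expnS expnD.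
rewrite !Sval !E.
set a := y ^+ q; set b := z ^+ q.
set a2 := (a ^+ _) ^+ _; set b2 := (b ^+ _) ^+ _.
have a0 : a2 != 0 by rewrite !expf_neq0.
have b0 : b2 != 0 by rewrite !expf_neq0.
move/eqP; rewrite eqr_div // => /eqP H.
apply: (fin2 r0 crn y0 z0) => /=; rewrite -/a -/b -/a2 -/b2.
have : a * b2 - b * a2 = 0.
  rewrite -[RHS](subrr ((b + d * b2) * a2)) -{1}H; ring.
move/eqP; rewrite subr_eq0 => /eqP H2.
by rewrite mulrC -H2 mulrC.
Qed.

Lemma scat2 r : (0 < r)%N -> coprime r n -> scattered q r.+1 (S r).
Proof.
move=> r0 crn y z y0 z0; rewrite !Sval !expnS !exprM.
set a := y ^+ q; set b := z ^+ q.
set a1 := a ^+ (q ^ r); set b1 := b ^+ (q ^ r).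
have a0 : a != 0 by rewrite expf_neq0.
have b0 : b != 0 by rewrite expf_neq0.
have a10 : a1 != 0 by rewrite expf_neq0.
have b10 : b1 != 0 by rewrite expf_neq0.
move/eqP; rewrite eqr_div // => /eqP H.
pose w := a * b1 - b * a1.
have hw : w = d * w ^+ (q ^ r).
  rewrite /w hfr !exprMn -/a1 -/b1.
  apply/eqP; rewrite -subr_eq0; apply/eqP.
  rewrite -[RHS](subrr ((b + d * b1 ^+ (q ^ r)) * a1)) -{1}H; ring.
have wfix : forall j, w = d ^+ j * w ^+ (q ^ (r * j)).
  elim=> [|j IH]; first by rewrite expr0 mul1r muln0 expn0 expr1.
  rewrite {1}IH {1}hw exprMn dfix -exprM -expnD mulnS exprSr -mulrA.
  by [].
case: (eqVneq w 0) => [w0|wn0].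
  apply: (final r0 crn).
  rewrite exprMn exprVn -/a -/b exprMn exprVn -/a1 -/b1.
  apply/eqP; rewrite eqr_div //; apply/eqP.
  by move/eqP: w0; rewrite subr_eq0 => /eqP ->; rewrite mulrC.
exfalso; apply: dn.
have := wfix n; rewrite (fixmul r (hq w)) => h.
apply: (mulIf wn0); by rewrite mul1r -h.
Qed.

End Core.

Theorem mainTheorem13 (p k n r : nat) (L : finFieldType) (delta : L) :
  prime p -> odd p -> (0 < k)%N ->
  #|L| = ((p ^ k) ^ n)%N ->
  odd n -> (3 < n)%N -> coprime n (p ^ k).-1 ->
  delta != 0 -> delta != 1 -> delta ^+ (p ^ k).-1 = 1 ->
  (0 < r)%N -> (r < n)%N -> coprime r n ->
  let q := (p ^ k)%N in
  let S : {poly L} := 'X^q + delta *: 'X^(q ^ (2 * r + 1)) in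
  scattered q r.+1 S /\
  (forall t : nat, t \in [:: 1%N; r.+1; (2 * r + 1)%N] -> scattered q t S).
Proof.
move=> pp podd k0 cardL nodd n3 hcop hd0 hd1 hdq r0 rn crn q S.
have hq : forall x : L, x ^+ (q ^ n) = x by move=> x; rewrite -cardL expf_card.
have chp : p \in [pchar L].
  by apply: (@card_finPcharP _ p (k * n)) => //; rewrite cardL expnM.
have hfr : forall e (x y : L), (x - y) ^+ (q ^ e) = x ^+ (q ^ e) - y ^+ (q ^ e).
  move=> e x y.
  have hn : ([pchar L]).-nat (q ^ e)%N.
    by rewrite (eq_pnat _ (pcharf_eq chp)) -expnM pnatX pnat_id.
  by have := exprDn_pchar (x - y) y hn; rewrite subrK => ->; rewrite addrK.
have n0 : (0 < n)%N by lia.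
have q0 : (0 < q)%N by rewrite expn_gt0 prime_gt0.
split; first by eapply scat2; eassumption.
move=> t; rewrite !inE => /or3P [] /eqP ->.
- by eapply scat1; eassumption.
- by eapply scat2; eassumption.
- by eapply scat3; eassumption.
Qed.
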